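(* Let $\mathcal{N}:\mathcal{L}(\mathbb{C}^{d_A})\to\mathcal{L}(\mathbb{C}^{d_B})$ be a quantum channel and let $d=\min\{d_A,d_B\}$. Then for all $n,m\in\mathbb{N}$, $$\mathcal{P}^{n\to m}(\mathcal{N}(\mathcal{Q}_{d_A}))\subseteq \mathcal{P}^{n\to m}(\mathcal{Q}_d).$$
   Context: A quantum channel is a completely positive trace-preserving (CPTP) map; $\mathcal{L}(\mathbb{C}^k)$ denotes the linear operators on $\mathbb{C}^k$. For a channel $\mathcal{N}:\mathcal{L}(\mathbb{C}^{d_A})\to\mathcal{L}(\mathbb{C}^{d_B})$ and $n,m\in\mathbb{N}$, $\mathcal{P}^{n\to m}(\mathcal{N}(\mathcal{Q}_{d_A}))$ denotes the set of all $n\times m$ matrices $P$ with $P_{ij}=\operatorname{Tr}[\Lambda_j\,\mathcal{N}(\rho_i)]$, where $\rho_1,\dots,\rho_n$ are density matrices on $\mathbb{C}^{d_A}$ and $\{\Lambda_j\}_{j=1}^m$ is a POVM on $\mathbb{C}^{d_B}$ (such matrices are called channel matrices). $\mathcal{P}^{n\to m}(\mathcal{Q}_d)$ denotes this set when $\mathcal{N}$ is the identity channel on $\mathcal{L}(\mathbb{C}^d)$. *)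

(* Defs.v *)
From HB Require Import structures.
From mathcomp Require Import all_boot all_order all_algebra.
From mathcomp Require Import complex mxtens.
From mathcomp Require Import reals.
Set Implicit Arguments. Unset Strict Implicit. Unset Printing Implicit Defensive.
Import Order.TTheory GRing.Theory Num.Theory.
Local Open Scope ring_scope.
Local Open Scope complex_scope.

Section Quantum.
Variable R : realType.
Local Notation C := R[i].

Definition adjmx m n (A : 'M[C]_(m, n)) : 'M[C]_(n, m) := (map_mx Num.conj A)^T.

(* positive semidefinite: <x, A x> >= 0 for every vector x
   (over C this forces A to be Hermitian) *)
Definition psd d (A : 'M[C]_d) : Prop :=
  forall x : 'cV[C]_d, 0 <= (adjmx x *m A *m x) 0 0.

Definition density d (rho : 'M[C]_d) : Prop := psd rho /\ \tr rho = 1.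

Definition povm d m (Lam : 'I_m -> 'M[C]_d) : Prop :=
  (forall j, psd (Lam j)) /\ \sum_(j < m) Lam j = 1%:M.

(* (id_k ⊗ N) acting on 'M_(k * dA) = M_k ⊗ M_dA, blockwise *)
Definition ampl k dA dB (N : 'M[C]_dA -> 'M[C]_dB) (X : 'M[C]_(k * dA))
  : 'M[C]_(k * dB) :=
  \matrix_(p, q)
    (N (\matrix_(a, b) X (mxtens_index ((mxtens_unindex p).1, a))
                         (mxtens_index ((mxtens_unindex q).1, b))))
      (mxtens_unindex p).2 (mxtens_unindex q).2.

Definition completely_positive dA dB (N : 'M[C]_dA -> 'M[C]_dB) : Prop :=
  forall k (X : 'M[C]_(k * dA)), psd X -> psd (ampl N X).

Definition trace_preserving dA dB (N : 'M[C]_dA -> 'M[C]_dB) : Prop :=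
  forall X, \tr (N X) = \tr X.

Definition channel dA dB (N : {linear 'M[C]_dA -> 'M[C]_dB}) : Prop :=
  completely_positive N /\ trace_preserving N.

Definition channel_matrices dA dB (N : 'M[C]_dA -> 'M[C]_dB) n m
  (P : 'M[C]_(n, m)) : Prop :=
  exists rho : 'I_n -> 'M[C]_dA, (forall i, density (rho i)) /\
  exists Lam : 'I_m -> 'M[C]_dB, povm Lam /\
  forall i j, P i j = \tr (Lam j *m N (rho i)).

Definition Q_matrices d n m (P : 'M[C]_(n, m)) : Prop :=
  channel_matrices (@id 'M[C]_d) P.

End Quantum.

(* Main.v *)
Require Import Defs.
From HB Require Import structures.
From mathcomp Require Import all_boot all_order all_algebra.
From mathcomp Require Import complex mxtens.
From mathcomp Require Import reals.
From mathcomp Require Import spectral sesquilinear.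
From mathcomp Require Import ring.
Set Implicit Arguments. Unset Strict Implicit. Unset Printing Implicit Defensive.
Import Order.TTheory GRing.Theory Num.Theory.
Local Open Scope ring_scope.

Section Aux.
Variable R : realType.
Local Notation C := R[i].

Lemma adjmxD m n (A B : 'M[C]_(m, n)) : adjmx (A + B) = adjmx A + adjmx B.
Proof. by apply/matrixP => i j; rewrite !mxE rmorphD. Qed.

Lemma adjmxZ m n c (A : 'M[C]_(m, n)) : adjmx (c *: A) = c^* *: adjmx A.
Proof. by apply/matrixP => i j; rewrite !mxE rmorphM. Qed.

Lemma adjmx_delta n (a : 'I_n) : adjmx (delta_mx a 0 : 'cV[C]_n) = delta_mx 0 a.
Proof.
by apply/matrixP => i j; rewrite !mxE ord1 eqxx andbT rmorph_nat.
Qed.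

Lemma delta_form n (A : 'M[C]_n) a b :
  ((delta_mx 0 a : 'rV[C]_n) *m A *m (delta_mx b 0 : 'cV[C]_n)) 0 0 = A a b.
Proof. by rewrite -rowE -colE !mxE. Qed.

Lemma e00D m n (M N : 'M[C]_(m,n)) i j : (M + N) i j = M i j + N i j.
Proof. by rewrite mxE. Qed.
Lemma e00Z m n c (M : 'M[C]_(m,n)) i j : (c *: M) i j = c * M i j.
Proof. by rewrite mxE. Qed.

Definition qf n (A : 'M[C]_n) (x : 'cV[C]_n) := (adjmx x *m A *m x) 0 0.

Lemma psd_herm n (A : 'M[C]_n) : psd A -> forall a b, (A b a)^* = A a b.
Proof.
move=> pA a b.
have qfr : forall x : 'cV[C]_n, ((adjmx x *m A *m x) 0 0)^* = (adjmx x *m A *m x) 0 0.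
  by move=> x; apply/CrealP; apply: ger0_real; apply: pA.
pose ea : 'cV[C]_n := delta_mx a 0; pose eb : 'cV[C]_n := delta_mx b 0.
have ex : forall c, (adjmx (ea + c *: eb) *m A *m (ea + c *: eb)) 0 0 =
   A a a + c * A a b + c^* * A b a + c^* * c * A b b.
  move=> c; rewrite /ea /eb adjmxD adjmxZ !adjmx_delta !mulmxDl !mulmxDr.
  rewrite -!scalemxAl -!scalemxAr !e00D !e00Z !delta_form.
  by rewrite !addrA mulrA.
have rd : forall c, (A c c)^* = A c c.
  by move=> c; have := qfr (delta_mx c 0); rewrite adjmx_delta delta_form.
have H1 := qfr (ea + 1 *: eb); have H2 := qfr (ea + 'i *: eb).
rewrite ex in H1; rewrite ex in H2.
rewrite !rmorphD !rmorphM /= in H1 H2.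
rewrite !rd !conjCK rmorph1 !mul1r in H1.
rewrite !rd !conjCK conjCi in H2.
set u := A a b in H1 H2 *; set w := A b a in H1 H2 *.
have E1 : u^* + w^* = u + w.
  move: H1; rewrite -!addrA; move/addrI; rewrite !addrA; move/addIr.
  by [].
have E2 : w^* - u^* = u - w.
  move: H2; rewrite -!addrA; move/addrI; rewrite !addrA.
  have F1 : 'i * - 'i * A b b = A b b by rewrite mulrN mulCii opprK mul1r.
  have F2 : - 'i * 'i * A b b = A b b by rewrite mulNr mulCii opprK mul1r.
  rewrite F1 F2; move/addIr => H.
  have hi : ('i : C) != 0 := neq0Ci _.
  apply: (mulfI hi); rewrite !mulrBr; move: H; rewrite !mulNr addrC => ->.
  by [].
have h2 : (2%:R : C) != 0 by rewrite pnatr_eq0.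
apply: (mulfI h2).
have L1 : 2%:R * w^* = (u^* + w^*) + (w^* - u^*) by ring.
have L2 : 2%:R * u = (u + w) + (u - w) by ring.
by rewrite L1 L2 E1 E2.
Qed.


Lemma psd_herm2 n (A : 'M[C]_n) : psd A -> map_mx Num.conj A^T = A.
Proof. by move=> pA; apply/matrixP => a b; rewrite !mxE psd_herm. Qed.

Lemma psd_normal n (A : 'M[C]_n) : psd A -> A \is normalmx.
Proof. by move=> pA; apply/normalmxP; rewrite psd_herm2. Qed.

Lemma conj_form n (A P : 'M[C]_n) i :
  (P *m A *m map_mx Num.conj P^T) i i = qf A (col i (map_mx Num.conj P^T)).
Proof.
rewrite /qf !mxE; apply: eq_big => // j _.
rewrite !mxE !big_distrl /=; apply: eq_bigr => k _; by rewrite !mxE conjCK.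
Qed.

Lemma tr_psd n (Y Z : 'M[C]_n) : psd Y -> psd Z -> 0 <= \tr (Y *m Z).
Proof.
move=> pY pZ; have /orthomx_spectralP E := psd_normal pY.
set P := spectralmx Y in E; set D := spectral_diag Y in E.
have Pu : P \is unitarymx := spectral_unitarymx Y.
rewrite invmx_unitary // in E.
have PP : P *m map_mx Num.conj P^T = 1%:M by apply/unitarymxP.
have ED : diag_mx D = P *m Y *m map_mx Num.conj P^T.
  by rewrite E !mulmxA PP mul1mx -!mulmxA PP mulmx1.
rewrite E -!mulmxA mxtrace_mulC -!mulmxA mul_diag_mx /mxtrace.
apply: sumr_ge0 => i _; rewrite mxE.
apply: mulr_ge0.
  have -> : D 0 i = diag_mx D i i by rewrite !mxE eqxx mulr1n.
  by rewrite ED conj_form; apply: pY.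
by rewrite mulmxA conj_form; apply: pZ.
Qed.

Lemma qfE n (A : 'M[C]_n) (x : 'cV[C]_n) :
  (adjmx x *m A *m x) 0 0 = \sum_j \sum_i (x i 0)^* * A i j * x j 0.
Proof.
rewrite mxE; apply: eq_bigr => j _; rewrite mxE big_distrl /=.
by apply: eq_bigr => i _; rewrite !mxE.
Qed.

Lemma reidx d (G : 'I_(1 * d) -> C) :
  \sum_(p < 1 * d) G p = \sum_(a < d) G (mxtens_index (ord0, a)).
Proof.
rewrite (reindex (fun a : 'I_d => mxtens_index (ord0, a))) //.
exists (fun p => (mxtens_unindex p).2) => [a _|p _].
  exact: (congr1 snd (mxtens_indexK (ord0, a))).
rewrite -[RHS](mxtens_unindexK p); congr mxtens_index.
by case: (mxtens_unindex p) => u v; rewrite (ord1 u).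
Qed.

Definition lift d (Y : 'M[C]_d) : 'M[C]_(1 * d) :=
  \matrix_(p, q) Y (mxtens_unindex p).2 (mxtens_unindex q).2.

Lemma psd_lift d (Y : 'M[C]_d) : psd Y -> psd (lift Y).
Proof.
move=> pY x1; pose x := \col_a x1 (mxtens_index (ord0, a)) 0.
have := pY x; rewrite !qfE reidx.
congr (0 <= _); apply: eq_bigr => j _; rewrite reidx.
by apply: eq_bigr => i _; rewrite !mxE !mxtens_indexK.
Qed.

Lemma psd_unlift d (Y : 'M[C]_d) : psd (lift Y) -> psd Y.
Proof.
move=> pL x; pose x1 : 'cV[C]_(1 * d) := \col_p x (mxtens_unindex p).2 0.
have := pL x1; rewrite !qfE reidx.
congr (0 <= _); apply: eq_bigr => j _; rewrite reidx.
by apply: eq_bigr => i _; rewrite !mxE !mxtens_indexK.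
Qed.

Lemma ampl_lift dA dB (N : 'M[C]_dA -> 'M[C]_dB) X :
  ampl N (lift X) = lift (N X).
Proof.
apply/matrixP => p q; rewrite !mxE; congr (N _ _ _).
by apply/matrixP => a b; rewrite !mxE !mxtens_indexK.
Qed.

Lemma CP_pos dA dB (N : 'M[C]_dA -> 'M[C]_dB) X :
  completely_positive N -> psd X -> psd (N X).
Proof.
by move=> cp pX; apply: psd_unlift; rewrite -ampl_lift; apply: cp; apply: psd_lift.
Qed.

Lemma outer_psd d (x : 'cV[C]_d) : psd (x *m adjmx x).
Proof.
move=> y; rewrite !mulmxA -mulmxA mxE big_ord1.
have -> : (adjmx x *m y) 0 0 = ((adjmx y *m x) 0 0)^*.
  rewrite !mxE rmorph_sum; apply: eq_bigr => k _.
  by rewrite !mxE rmorphM /= conjCK mulrC.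
exact: mul_conjC_ge0.
Qed.

Lemma tr_delta d (a b : 'I_d) : \tr (delta_mx a b : 'M[C]_d) = (a == b)%:R.
Proof.
rewrite -(@mul_delta_mx _ d 1 d 0 a b) mxtrace_mulC mul_delta_mx_cond.
by rewrite raddfMn /= /mxtrace big_ord1 mxE !eqxx /= eq_sym.
Qed.
End Aux.

Lemma mxtrace_sum (R : realType) d (I : Type) (r : seq I) (F : I -> 'M[R[i]]_d) :
  \tr (\sum_(i <- r) F i) = \sum_(i <- r) \tr (F i).
Proof. exact: raddf_sum. Qed.

Lemma trM (R : realType) dA dB (N : {linear 'M[R[i]]_dA -> 'M[R[i]]_dB})
  (L : 'M[R[i]]_dB) (X : 'M[R[i]]_dA) :
  \tr ((\matrix_(b, a) \tr (L *m N (delta_mx a b))) *m X) = \tr (L *m N X).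
Proof.
have -> : \tr (L *m N X) = \sum_a \sum_b X a b * \tr (L *m N (delta_mx a b)).
  rewrite {1}(matrix_sum_delta X) linear_sum mulmx_sumr mxtrace_sum.
  apply: eq_bigr => a _; rewrite linear_sum mulmx_sumr mxtrace_sum.
  by apply: eq_bigr => b _; rewrite linearZ -scalemxAr mxtraceZ.
rewrite exchange_big {1}/mxtrace; apply: eq_bigr => b _.
rewrite mxE; apply: eq_bigr => a _; by rewrite mxE mulrC.
Qed.

Unset Implicit Arguments.
Local Open Scope complex_scope.

Theorem proposition1 (R : realType) (dA dB : nat)
    (N : {linear 'M[R[i]]_dA -> 'M[R[i]]_dB}) :
  channel N ->
  forall (n m : nat) (P : 'M[R[i]]_(n, m)),
    channel_matrices N P -> Q_matrices (minn dA dB) P.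
Proof.
move=> [cp tp] n m P [rho [hrho [Lam [[hL1 hL2] hP]]]].
have [h|h] := leqP dB dA.
  rewrite /Q_matrices.
  exists (fun i => N (rho i)); split.
    move=> i; split; first by apply: CP_pos => //; exact: (hrho i).1.
    by rewrite tp (hrho i).2.
  by exists Lam; split.
have h' : (dA <= dB)%N by apply: ltnW.
rewrite /Q_matrices.
exists rho; split => //.
exists (fun j => \matrix_(b, a) \tr (Lam j *m N (delta_mx a b))); split; last first.
  by move=> i j; rewrite hP /= trM.
split.
  move=> j x.
  have -> : (adjmx x *m (\matrix_(b, a) \tr (Lam j *m N (delta_mx a b))) *m x) 0 0
     = \tr ((\matrix_(b, a) \tr (Lam j *m N (delta_mx a b))) *m (x *m adjmx x)).
    rewrite mulmxA -mxtrace_mulC mulmxA /mxtrace big_ord1 //.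
  rewrite trM; apply: tr_psd => //; apply: CP_pos => //; exact: outer_psd.
apply/matrixP => b a; rewrite summxE.
under eq_bigr do rewrite mxE.
rewrite -mxtrace_sum -mulmx_suml hL2 mul1mx tp tr_delta !mxE eq_sym.
by [].
Qed.
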